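(* Let $\mathcal{S}=\{1,\dots,S\}$, $T>0$, let $R_t$ be the rate matrix of a forward CTMC with $X_0\sim p_{\text{data}}$, conditionals $q_{t|0}$, marginals $q_t$ and posterior $p(x_0\mid x_t)$, and let $\hat R_t(i,j)=R_t(j,i)q_t(j)/q_t(i)$ be the true reverse rates, $\hat R_t(i,j\mid x_0)=R_t(j,i)\frac{q_{t|0}(j\mid x_0)}{q_{t|0}(i\mid x_0)}$ the conditional reverse rates, and $f(r,c)=r\log\frac rc-r+c$. Let $R^\theta_t(i,j)$ be model reverse rates, and define \[ \mathcal{L}_{\mathrm{KL}}(\theta):=\int_0^T\mathbb{E}_{x_0\sim p_{\text{data}},\,x_t\sim q_{t|0}(\cdot\mid x_0)}\Bigl[\sum_{j\ne x_t}f\bigl(\hat R_t(x_t,j\mid x_0),R^\theta_t(x_t,j)\bigr)\Bigr]\mathrm{d}t, \] \[ \mathrm{KL}(\hat{\mathbb{Q}}\|\mathbb{P}^\theta):=\int_0^T\sum_iq_t(i)\sum_{j\ne i}f\bigl(\hat R_t(i,j),R^\theta_t(i,j)\bigr)\mathrm{d}t. \] Assume: (i) the forward quantities $q_t$, $q_{t|0}$, $p(x_0\mid x_t)$ do not depend on $\theta$; (ii) $R^\theta_t(i,j)>0$ and is differentiable in $\theta$ for all $i\ne j$; (iii) differentiation in $\theta$ can be exchanged with expectation/integration. Then there is a $\theta$-independent constant $C_{\mathrm{gap}}\ge0$ with $\mathcal{L}_{\mathrm{KL}}(\theta)=\mathrm{KL}(\hat{\mathbb{Q}}\|\mathbb{P}^\theta)+C_{\mathrm{gap}}$;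 hence $\nabla_\theta\mathcal{L}_{\mathrm{KL}}(\theta)=\nabla_\theta\mathrm{KL}(\hat{\mathbb{Q}}\|\mathbb{P}^\theta)$, $\arg\min_\theta\mathcal{L}_{\mathrm{KL}}(\theta)=\arg\min_\theta\mathrm{KL}(\hat{\mathbb{Q}}\|\mathbb{P}^\theta)$, and every stationary point of one objective is a stationary point of the other.
   Context: A rate matrix $R_t$ satisfies $R_t(i,j)\ge0$ ($i\ne j$), $\sum_jR_t(i,j)=0$. $q_{t|0}(i\mid x_0)=\mathbb{P}(X_t=i\mid X_0=x_0)$, $q_t(i)=\sum_{x_0}p_{\text{data}}(x_0)q_{t|0}(i\mid x_0)$, $p(x_0\mid x_t)=p_{\text{data}}(x_0)q_{t|0}(x_t\mid x_0)/q_t(x_t)$. $\hat{\mathbb{Q}}$ and $\mathbb{P}^\theta$ denote the path measures of the true reverse process and of the generative process with rates $R^\theta_t$. All ratios and logarithms are assumed well defined (convention $0\log0=0$). *)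

(* Defs.v *)
From HB Require Import structures.
From mathcomp Require Import all_boot all_order all_algebra.
From mathcomp Require Import all_classical all_reals all_analysis.
Set Implicit Arguments. Unset Strict Implicit. Unset Printing Implicit Defensive.
Import Order.TTheory GRing.Theory Num.Theory.
Import numFieldNormedType.Exports.
Local Open Scope classical_set_scope.
Local Open Scope ring_scope.

Section Defs.
Variables (R : realType) (S : nat).

(* f(r,c) = r log (r/c) - r + c ; ln 0 = 0 in mathcomp gives 0 log 0 = 0 *)
Definition fdiv (r c : R) : R := r * ln (r / c) - r + c.

(* marginal q_t(i) = sum_x0 p_data(x0) q_{t|0}(i|x0);  q t x0 i = q_{t|0}(i|x0) *)
Definition marg (pdata : 'I_S -> R) (q : R -> 'I_S -> 'I_S -> R) (t : R) (i : 'I_S) : R :=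
  \sum_(x0 : 'I_S) pdata x0 * q t x0 i.

Definition rev_rate (Rt : R -> 'I_S -> 'I_S -> R) (pdata : 'I_S -> R)
  (q : R -> 'I_S -> 'I_S -> R) (t : R) (i j : 'I_S) : R :=
  Rt t j i * marg pdata q t j / marg pdata q t i.

Definition cond_rev_rate (Rt : R -> 'I_S -> 'I_S -> R)
  (q : R -> 'I_S -> 'I_S -> R) (t : R) (x0 i j : 'I_S) : R :=
  Rt t j i * q t x0 j / q t x0 i.

Definition LKL_integrand d (Rt : R -> 'I_S -> 'I_S -> R) (pdata : 'I_S -> R)
  (q : R -> 'I_S -> 'I_S -> R) (Rth : 'rV[R]_d -> R -> 'I_S -> 'I_S -> R)
  (th : 'rV[R]_d) (t : R) : R :=
  \sum_(x0 : 'I_S) \sum_(xt : 'I_S) pdata x0 * q t x0 xt *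
     \sum_(j : 'I_S | j != xt) fdiv (cond_rev_rate Rt q t x0 xt j) (Rth th t xt j).

Definition KL_integrand d (Rt : R -> 'I_S -> 'I_S -> R) (pdata : 'I_S -> R)
  (q : R -> 'I_S -> 'I_S -> R) (Rth : 'rV[R]_d -> R -> 'I_S -> 'I_S -> R)
  (th : 'rV[R]_d) (t : R) : R :=
  \sum_(i : 'I_S) marg pdata q t i *
     \sum_(j : 'I_S | j != i) fdiv (rev_rate Rt pdata q t i j) (Rth th t i j).

Definition LKL d (T : R) Rt pdata q (Rth : 'rV[R]_d -> R -> 'I_S -> 'I_S -> R) th : R :=
  Rintegral lebesgue_measure `[0, T] (LKL_integrand Rt pdata q Rth th).

Definition KLpath d (T : R) Rt pdata q (Rth : 'rV[R]_d -> R -> 'I_S -> 'I_S -> R) th : R :=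
  Rintegral lebesgue_measure `[0, T] (KL_integrand Rt pdata q Rth th).

Definition rate_matrix (M : 'I_S -> 'I_S -> R) : Prop :=
  (forall i j, i != j -> 0 <= M i j) /\ (forall i, \sum_(j : 'I_S) M i j = 0).

End Defs.

Definition stationary (R : realType) d (F : 'rV[R]_d -> R) (th : 'rV[R]_d) : Prop :=
  differentiable F th /\ forall v : 'rV[R]_d, 'D_v F th = 0.

(* Main.v *)
Require Import Defs.
From HB Require Import structures.
From mathcomp Require Import all_boot all_order all_algebra.
From mathcomp Require Import all_classical all_reals all_analysis.
From mathcomp Require Import lra ring.
Import Order.TTheory GRing.Theory Num.Theory.
Import numFieldNormedType.Exports.
Local Open Scope classical_set_scope.
Local Open Scope ring_scope.

Section H.
Variable R : realType.

Lemma fdiv_rc (r c : R) : 0 <= r -> 0 < c -> fdiv r c = r * (ln r - ln c) + (c - r).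
Proof.
rewrite le_eqVlt => /predU1P[<- |r0] c0; first by rewrite /fdiv !mul0r; lra.
by rewrite /fdiv ln_div ?posrE //; lra.
Qed.

Lemma fdiv_split (x r c : R) : 0 <= x -> 0 <= r -> 0 < c -> (x = 0 \/ 0 < r) ->
  fdiv x c = fdiv x r + x * (ln r - ln c) + (c - r).
Proof.
move=> x0 r0 c0 [->|rp].
  by rewrite /fdiv !mul0r; lra.
move: x0; rewrite le_eqVlt => /predU1P[<- |xp].
  by rewrite /fdiv !mul0r; lra.
rewrite /fdiv !ln_div ?posrE //. 
set a := ln x; set b := ln r; set e := ln c.
rewrite !mulrBr; lra.
Qed.

Lemma fdiv_ge0 (x r : R) : 0 <= x -> 0 <= r -> (x = 0 \/ 0 < r) -> 0 <= fdiv x r.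
Proof.
move=> x0 r0 [->|rp]; first by rewrite /fdiv !mul0r; lra.
move: x0; rewrite le_eqVlt => /predU1P[<- |xp]; first by rewrite /fdiv !mul0r; lra.
have h := @le_ln1Dx R (r / x - 1).
have hx : -1 < r / x - 1 by have := divr_gt0 rp xp; lra.
have := h hx; rewrite addrC subrK => h2.
have e : ln (x / r) = - ln (r / x).
  by rewrite -lnV ?posrE ?divr_gt0 // invf_div.
rewrite /fdiv e.
have : x * ln (r / x) <= x * (r / x - 1) by rewrite ler_pM2l.
rewrite mulrBr mulr1 mulrCA divff ?gt_eqF // mulr1 mulrN; lra.
Qed.
End H.
Section K.
Variables (R : realType) (S d : nat) (Rt : R -> 'I_S -> 'I_S -> R) (pdata : 'I_S -> R)
  (q : R -> 'I_S -> 'I_S -> R) (Rth : 'rV[R]_d -> R -> 'I_S -> 'I_S -> R).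

Definition Egap (t : R) : R :=
  \sum_(xt : 'I_S) \sum_(j : 'I_S | j != xt) \sum_(x0 : 'I_S)
    pdata x0 * q t x0 xt * fdiv (cond_rev_rate Rt q t x0 xt j) (rev_rate Rt pdata q t xt j).

Hypothesis p0 : forall x0, 0 <= pdata x0.
Hypothesis p1 : \sum_(x0 : 'I_S) pdata x0 = 1.

Lemma marg_gt0 t i : (forall x0, 0 < q t x0 i) -> 0 < marg pdata q t i.
Proof.
move=> qp; have m0 : 0 <= marg pdata q t i.
  by apply: sumr_ge0 => x0 _; apply: mulr_ge0 => //; apply: ltW.
rewrite lt_neqAle m0 andbT; apply/eqP => /esym h.
have := @psumr_eq0P R _ predT _ (fun x0 _ => mulr_ge0 (p0 x0) (ltW (qp x0))) h.
move=> hz; have : \sum_(x0 : 'I_S) pdata x0 = 0.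
  apply: big1 => x0 _; have := hz x0 isT.
  by move/eqP; rewrite mulf_eq0 (gt_eqF (qp x0)) orbF => /eqP.
by rewrite p1; move/eqP; rewrite oner_eq0.
Qed.

Variable t : R.
Hypothesis rm : rate_matrix (Rt t).
Hypothesis qp : forall x0 i, 0 < q t x0 i.

Lemma Egap_ge0 : 0 <= Egap t.
Proof.
apply: sumr_ge0 => xt _; apply: sumr_ge0 => j jxt; apply: sumr_ge0 => x0 _.
apply: mulr_ge0; first by apply: mulr_ge0 => //; apply: ltW.
have a0 : 0 <= Rt t j xt by apply: (proj1 rm).
have m0 := @marg_gt0 t xt (qp ^~ xt); have mj := @marg_gt0 t j (qp ^~ j).
apply: fdiv_ge0.
- by rewrite /cond_rev_rate; apply: divr_ge0; [apply: mulr_ge0 => //; apply: ltW|apply: ltW].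
- by rewrite /rev_rate; apply: divr_ge0; [apply: mulr_ge0 => //; apply: ltW|apply: ltW].
- move: a0; rewrite le_eqVlt => /predU1P[ae|ap]; [left|right].
    by rewrite /cond_rev_rate -ae !mul0r.
  by rewrite /rev_rate; apply: divr_gt0 => //; apply: mulr_gt0.
Qed.

Lemma key th : (forall i j, i != j -> 0 < Rth th t i j) ->
  LKL_integrand Rt pdata q Rth th t = KL_integrand Rt pdata q Rth th t + Egap t.
Proof.
move=> Rp.
rewrite /LKL_integrand /KL_integrand /Egap -big_split /=.
under eq_bigr do under eq_bigr do rewrite mulr_sumr.
rewrite exchange_big /=; apply: eq_bigr => xt _.
rewrite exchange_big /= mulr_sumr -big_split /=; apply: eq_bigr => j jxt.
have a0 : 0 <= Rt t j xt by apply: (proj1 rm).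
have m0 := @marg_gt0 t xt (qp ^~ xt); have mj := @marg_gt0 t j (qp ^~ j).
set r := rev_rate Rt pdata q t xt j.
set c := Rth th t xt j.
have c0 : 0 < c by apply: Rp; rewrite eq_sym.
have r0 : 0 <= r.
  by rewrite /r /rev_rate; apply: divr_ge0; [apply: mulr_ge0 => //; apply: ltW|apply: ltW].
have -> : \sum_x0 pdata x0 * q t x0 xt * fdiv (cond_rev_rate Rt q t x0 xt j) c =
  \sum_x0 (pdata x0 * q t x0 xt * fdiv (cond_rev_rate Rt q t x0 xt j) r +
     (Rt t j xt * (pdata x0 * q t x0 j)) * (ln r - ln c) + pdata x0 * q t x0 xt * (c - r)).
  apply: eq_bigr => x0 _.
  rewrite (@fdiv_split R _ r) //.
  - have hw : pdata x0 * q t x0 xt * cond_rev_rate Rt q t x0 xt j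
        = Rt t j xt * (pdata x0 * q t x0 j).
      rewrite /cond_rev_rate; have qx := qp x0 xt.
      by field; rewrite gt_eqF.
    rewrite -hw; ring.
  - by rewrite /cond_rev_rate; apply: divr_ge0; [apply: mulr_ge0 => //; apply: ltW|apply: ltW].
  - move: a0; rewrite le_eqVlt => /predU1P[ae|ap]; [left|right].
      by rewrite /cond_rev_rate -ae !mul0r.
    by rewrite /r /rev_rate; apply: divr_gt0 => //; apply: mulr_gt0.
rewrite !big_split /= -!mulr_suml -mulr_sumr.
rewrite (@fdiv_rc R r c) // -/(marg pdata q t j) -/(marg pdata q t xt).
have -> : Rt t j xt * marg pdata q t j = marg pdata q t xt * r.
  by rewrite /r /rev_rate; field; rewrite gt_eqF.
ring.
Qed.
End K.

Section Shift.
Variables (R : realType) (V : normedModType R).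

Lemma shift_props (G : V -> R) (C : R) (x : V) :
  (differentiable (fun y => G y + C) x <-> differentiable G x) /\
  forall v, (derivable (fun y => G y + C) x v <-> derivable G x v) /\
    'D_v (fun y => G y + C) x = 'D_v G x.
Proof.
have E1 : (fun y => G y + C) = G + cst C by [].
have E2 : G = (fun y => G y + C) - cst C.
  by apply/funext => y /=; rewrite addrK.
split.
  split => h.
    by rewrite E2; apply: differentiableB => //; apply: differentiable_cst.
  by rewrite E1; apply: differentiableD => //; apply: differentiable_cst.
move=> v; split.
  split => h.
    by rewrite E2; apply: derivableB => //; apply: derivable_cst.
  by rewrite E1; apply: derivableD => //; apply: derivable_cst.
rewrite /derive /=.
have -> : (fun h : R => h^-1 *: (G (h *: v + x) + C - (G x + C))) =
          (fun h : R => h^-1 *: (G (h *: v + x) - G x)).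
  by apply/funext => h; rewrite opprD addrACA subrr addr0.
by [].
Qed.
End Shift.
Theorem proposition4p8 (R : realType) (S d : nat) (T : R)
  (Rt : R -> 'I_S -> 'I_S -> R) (pdata : 'I_S -> R)
  (q : R -> 'I_S -> 'I_S -> R)
  (Rth : 'rV[R]_d -> R -> 'I_S -> 'I_S -> R) :
  0 < T ->
  (* forward CTMC with rate matrices R_t, X_0 ~ p_data *)
  (forall t, rate_matrix (Rt t)) ->
  (forall x0, 0 <= pdata x0) -> \sum_(x0 : 'I_S) pdata x0 = 1 ->
  (forall x0 i, q 0 x0 i = (i == x0)%:R) ->
  (forall x0 i, {within `[0, T], continuous (fun s => q s x0 i)}) ->
  (forall x0 j t, 0 < t < T ->
     is_derive t 1 (fun s => q s x0 j) (\sum_(i : 'I_S) q t x0 i * Rt t i j)) ->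
  (* ratios and logarithms well defined *)
  (forall t x0 i, 0 < t <= T -> 0 < q t x0 i) ->
  (* (ii) positivity and differentiability of the model rates *)
  (forall th t i j, i != j -> 0 < Rth th t i j) ->
  (forall t i j th, i != j -> differentiable (fun th' => Rth th' t i j) th) ->
  (* both objectives are well-defined (finite) integrals *)
  (forall th, lebesgue_measure.-integrable `[0, T]
       (EFin \o LKL_integrand Rt pdata q Rth th)) ->
  (forall th, lebesgue_measure.-integrable `[0, T]
       (EFin \o KL_integrand Rt pdata q Rth th)) ->
  exists Cgap : R, 0 <= Cgap /\
    (forall th, LKL T Rt pdata q Rth th = KLpath T Rt pdata q Rth th + Cgap) /\
    (forall th, (differentiable (LKL T Rt pdata q Rth) th <->
                 differentiable (KLpath T Rt pdata q Rth) th) /\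
       forall v, (derivable (LKL T Rt pdata q Rth) th v <->
                  derivable (KLpath T Rt pdata q Rth) th v) /\
                 'D_v (LKL T Rt pdata q Rth) th = 'D_v (KLpath T Rt pdata q Rth) th) /\
    (forall th, (forall th', LKL T Rt pdata q Rth th <= LKL T Rt pdata q Rth th') <->
                (forall th', KLpath T Rt pdata q Rth th <= KLpath T Rt pdata q Rth th')) /\
    (forall th, stationary (LKL T Rt pdata q Rth) th <->
                stationary (KLpath T Rt pdata q Rth) th).
Proof.
move=> T0 rmh p0 p1 q0 qc qd qp Rp Rd iL iK.
set D := [set` Interval (BRight (0:R)) (BRight T)].
have mD : measurable D by exact: measurable_itv.
have mC : measurable `[0, T] by exact: measurable_itv.
have sD : D `<=` `[0, T].
  by move=> x; rewrite /D /= !in_itv /= => /andP[/ltW -> ->].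
have Dq : forall x, D x -> forall x0 i, 0 < q x x0 i.
  by move=> x; rewrite /D /= in_itv /= => /andP[a b] x0 i; apply: qp; rewrite a b.
have LD : forall th, LKL T Rt pdata q Rth th =
    \int[lebesgue_measure]_(x in D) LKL_integrand Rt pdata q Rth th x.
  move=> th; rewrite /LKL /D Rintegral_itv_obnd_cbnd //.
  apply: (integrableS _ _ _ (iL th)) => //; exact: measurable_itv.
have KD : forall th, KLpath T Rt pdata q Rth th =
    \int[lebesgue_measure]_(x in D) KL_integrand Rt pdata q Rth th x.
  move=> th; rewrite /KLpath /D Rintegral_itv_obnd_cbnd //.
  apply: (integrableS _ _ _ (iK th)) => //; exact: measurable_itv.
set Cgap := \int[lebesgue_measure]_(x in D)
   (LKL_integrand Rt pdata q Rth 0 x - KL_integrand Rt pdata q Rth 0 x).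
have Cge0 : 0 <= Cgap.
  apply: Rintegral_ge0 => x Dx.
  rewrite (@key _ _ _ _ _ _ _ p0 p1 x (rmh x) (Dq x Dx) _ (Rp 0 x)) addrAC subrr add0r.
  exact: (@Egap_ge0 _ _ _ _ _ p0 p1 x (rmh x) (Dq x Dx)).
have Heq : forall th, LKL T Rt pdata q Rth th = KLpath T Rt pdata q Rth th + Cgap.
  move=> th; rewrite LD KD /Cgap -RintegralD //.
  - apply: eq_Rintegral => x /set_mem Dx.
    rewrite (@key _ _ _ _ _ _ _ p0 p1 x (rmh x) (Dq x Dx) _ (Rp th x)).
    by rewrite (@key _ _ _ _ _ _ _ p0 p1 x (rmh x) (Dq x Dx) _ (Rp 0 x)) addrAC subrr add0r.
  - apply: (integrableS _ _ _ (iK th)) => //; exact: measurable_itv.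
  - have -> : (EFin \o (fun x => LKL_integrand Rt pdata q Rth 0 x - KL_integrand Rt pdata q Rth 0 x))
       = ((EFin \o LKL_integrand Rt pdata q Rth 0) \- (EFin \o KL_integrand Rt pdata q Rth 0))%E.
      by apply/funext => x /=; rewrite EFinB.
    apply: integrableB => //.
      by apply: (integrableS _ _ _ (iL 0)) => //; exact: measurable_itv.
    by apply: (integrableS _ _ _ (iK 0)) => //; exact: measurable_itv.
have HF : LKL T Rt pdata q Rth = (fun th => KLpath T Rt pdata q Rth th + Cgap).
  by apply/funext => th; exact: Heq.
exists Cgap; split => //; split => //.
rewrite HF; split.
  by move=> th; have [h1 h2] := @shift_props _ _ (KLpath T Rt pdata q Rth) Cgap th; split.
split.
  move=> th; split => h th'; first by have := h th'; rewrite lerD2r.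
  by rewrite lerD2r.
move=> th; have [h1 h2] := @shift_props _ _ (KLpath T Rt pdata q Rth) Cgap th.
rewrite /stationary h1; split => -[hd hv]; split => // v.
  by rewrite -(h2 v).2.
by rewrite (h2 v).2.
Qed.
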